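(* Let $d\ge 3$. For $(i,j)\in\mathbb{Z}_d\times\mathbb{Z}_d$ with $i\neq 0$ define $$\mathcal{C}_{i,j}=\{(x,y)\in\mathbb{Z}_d\times\mathbb{Z}_d:\ iy-jx\equiv 0 \pmod d,\ x\in i\mathbb{Z}_d\},$$ where $i\mathbb{Z}_d=\{ik \bmod d: k\in\mathbb{Z}_d\}$, and define $\mathcal{C}_{0,0}=\{(0,y):y\in\mathbb{Z}_d\}$. Then: (1) for every $i\ne 0$ and every $j$, $\mathcal{C}_{i,j}$ is a maximally commutative set with exactly $d$ elements; (2) every maximally commutative set in $\mathbb{Z}_d\times\mathbb{Z}_d$ equals $\mathcal{C}_{0,0}$ or $\mathcal{C}_{i,j}$ for some $i\ne 0$; (3) the sets in $$\mathcal{MCS}_d=\{\mathcal{C}_{i,j}: 1\le i<d,\ i\mid d,\ 0\le j\le d/i-1\}\cup\{\mathcal{C}_{0,0}\}$$ are pairwise distinct and are exactly all the maximally commutative sets; in particular the number of maximally commutative sets is $\sigma(d)$, the sum of all positive divisors of $d$.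
   Context: $\mathbb{Z}_d=\{0,1,\dots,d-1\}$ with addition and multiplication mod $d$. Two pairs $(m,n),(m',n')\in\mathbb{Z}_d\times\mathbb{Z}_d$ are said to commute if $mn'-nm'\equiv 0 \pmod d$ (equivalently the generalized Pauli matrices $X^mZ^n$ and $X^{m'}Z^{n'}$ commute, where $X=\sum_i|i+1\bmod d\rangle\langle i|$, $Z=\sum_i e^{2\pi\sqrt{-1}i/d}|i\rangle\langle i|$). A subset $\mathcal{C}\subseteq\mathbb{Z}_d\times\mathbb{Z}_d$ is a maximally commutative set (MCS) if any two of its elements commute and no element of $(\mathbb{Z}_d\times\mathbb{Z}_d)\setminus\mathcal{C}$ commutes with every element of $\mathcal{C}$. $\sigma(d)=\sum_{k\mid d,\,k\ge1}k$. *)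

(* Defs.v *)
(* Z_d is represented by 'I_d with arithmetic mod d on nat. *)
From mathcomp Require Import all_boot.
Set Implicit Arguments. Unset Strict Implicit. Unset Printing Implicit Defensive.

Section Defs.
Variable d : nat.

Definition pt := ('I_d * 'I_d)%type.

(* (m,n) and (m',n') commute iff m n' - n m' = 0 (mod d), i.e. m n' = n m' (mod d) *)
Definition commb (p q : pt) : bool := (p.1 * q.2 == p.2 * q.1 %[mod d]).

Definition is_MCS (C : {set pt}) : bool :=
  [forall p in C, forall q in C, commb p q] &&
  [forall p, (p \notin C) ==> [exists q in C, ~~ commb p q]].

Definition iZ (i : 'I_d) : pred nat := fun x => [exists k : 'I_d, x == (i * k) %% d].

Definition Cij (i j : 'I_d) : {set pt} :=
  [set p : pt | (i * p.2 == j * p.1 %[mod d]) && iZ i p.1].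

Definition C00 : {set pt} := [set p : pt | p.1 == 0 :> nat].

Definition MCS_index : {set 'I_d * 'I_d} :=
  [set ij : 'I_d * 'I_d | [&& 0 < ij.1, ij.1 %| d & ij.2 < d %/ ij.1]].

Definition MCS_d : {set {set pt}} :=
  [set Cij ij.1 ij.2 | ij in MCS_index] :|: [set C00].

End Defs.

Definition sigma (n : nat) : nat := \sum_(k <- divisors n) k.

(* Main.v *)
Require Import Defs.
From mathcomp Require Import all_boot all_order all_algebra ring zify.
Import GRing.Theory Num.Theory.


Lemma modZ (d m k : nat) : (m = k %[mod d]) <-> (d%:Z %| (m%:Z - k%:Z)%R)%Z.
Proof.
rewrite -eqz_mod_dvd !modz_nat eqz_nat; split; first by move=> ->.
by move/eqP.
Qed.

Lemma lin_mod d a b x y x' y' u v : x*v = y*u %[mod d] -> x'*v = y'*u %[mod d] ->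
  ((a*x+b*x') %% d) * v = ((a*y+b*y') %% d) * u %[mod d].
Proof.
rewrite !modnMml; move/modZ => H1 /modZ H2; apply/modZ.
have -> : (Posz ((a * x + b * x') * v) - Posz ((a * y + b * y') * u) =
  Posz a * (Posz (x*v) - Posz (y*u)) + Posz b * (Posz (x'*v) - Posz (y'*u)))%R.
  rewrite !PoszM !PoszD !PoszM; ring.
by rewrite rpredD // dvdz_mull.
Qed.

Definition lin n (a : nat) (p : pt n.+1) (b : nat) (q : pt n.+1) : pt n.+1 :=
  (inord ((a * p.1 + b * q.1) %% n.+1), inord ((a * p.2 + b * q.2) %% n.+1)).

Arguments lin {n}.

Lemma inord_mod n m : (inord (m %% n.+1) : 'I_n.+1) = m %% n.+1 :> nat.
Proof. by rewrite inordK // ltn_pmod. Qed.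

Lemma commC n (p q : pt n) : commb p q = commb q p.
Proof. by rewrite /commb eq_sym mulnC [q.2 * _]mulnC. Qed.

Lemma comm_lin n a b (p q r : pt n.+1) :
  commb p r -> commb q r -> commb (lin a p b q) r.
Proof.
rewrite /commb => /eqP H1 /eqP H2; apply/eqP; rewrite /lin /= !inord_mod.
exact: lin_mod.
Qed.

Lemma mem_MCS n (C : {set pt n}) p : is_MCS C -> (forall q, q \in C -> commb p q) -> p \in C.
Proof.
case/andP=> _ /forallP H Hp; apply/negPn/negP=> Hn.
move: (H p); rewrite Hn /= => /existsP [q /andP [Hq Hc]].
by rewrite Hp in Hc.
Qed.

Lemma MCS_comm n (C : {set pt n}) p q : is_MCS C -> p \in C -> q \in C -> commb p q.
Proof. by case/andP => /forall_inP H _ Hp Hq; move: (H p Hp) => /forall_inP; apply. Qed.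

Lemma is_MCS_intro n (C : {set pt n}) :
  (forall p q, p \in C -> q \in C -> commb p q) ->
  (forall p, (forall q, q \in C -> commb p q) -> p \in C) -> is_MCS C.
Proof.
move=> H1 H2; apply/andP; split.
  by apply/forall_inP => p Hp; apply/forall_inP => q Hq; apply: H1.
apply/forallP => p; apply/implyP => Hp; apply: contraR Hp => /existsPn H.
apply: H2 => q Hq; move: (H q); by rewrite Hq /= negbK.
Qed.

Lemma MCS_lin n (C : {set pt n.+1}) a p b q :
  is_MCS C -> p \in C -> q \in C -> lin a p b q \in C.
Proof.
move=> HC Hp Hq; apply: mem_MCS => // r Hr; apply: comm_lin; exact: MCS_comm HC _ _.
Qed.

Arguments MCS_lin {n C}.
Arguments MCS_comm {n C p q}.

Lemma iZ_dvd n (i : 'I_n.+1) x : iZ i x -> gcdn i n.+1 %| x.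
Proof.
case/existsP => k /eqP ->; rewrite /dvdn (modn_dvdm _ (dvdn_gcdr _ _)).
by rewrite -/(dvdn _ _) dvdn_mulr // dvdn_gcdl.
Qed.

Lemma iZ_of_dvd n (i : 'I_n.+1) x : 0 < i -> x < n.+1 -> gcdn i n.+1 %| x -> iZ i x.
Proof.
move=> i0 xd Hg; have xd' := xd; move: Hg xd => /dvdnP [t ->] xd.
case: (egcdnP n.+1 i0) => km kn Hk _.
apply/existsP; exists (inord (km * t %% n.+1)); rewrite inord_mod.
apply/eqP; rewrite modnMmr.
have -> : i * (km * t) = (t * kn) * n.+1 + t * gcdn i n.+1.
  by rewrite mulnA [i * km]mulnC Hk; ring.
by rewrite modnMDl modn_small.
Qed.

Lemma inCij n (i j : 'I_n.+1) p :
  (p \in Cij i j) = (i * p.2 == j * p.1 %[mod n.+1]) && iZ i p.1.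
Proof. by rewrite inE. Qed.

Lemma Cij_comm n (i j : 'I_n.+1) p q : p \in Cij i j -> q \in Cij i j -> commb p q.
Proof.
case: p => x y; case: q => x' y'; rewrite !inCij /=.
move=> /andP [/eqP/modZ H1 /existsP [k /eqP Hx]] /andP [/eqP/modZ H2 /existsP [k' /eqP Hx']].
have/modZ H3 : (x : nat) = i * k %[mod n.+1] by rewrite Hx modn_mod.
have/modZ H4 : (x' : nat) = i * k' %[mod n.+1] by rewrite Hx' modn_mod.
rewrite /commb /=; apply/eqP/modZ.
have -> : (Posz (x*y') - Posz (y*x') = (Posz x - Posz (i*k)) * Posz y'
   + Posz k * (Posz (i*y') - Posz (j*x')) + Posz k * Posz j * (Posz x' - Posz (i*k'))
   - (Posz x' - Posz (i*k'))*Posz y - Posz k' * (Posz (i*y) - Posz (j*x))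
   - Posz k' * Posz j * (Posz x - Posz (i*k)))%R by rewrite !PoszM; ring.
by repeat (apply: rpredB || apply: rpredD); solve [apply: dvdz_mull; done | apply: dvdz_mulr; done]. Qed.

Arguments Cij_comm {n i j p q}.

Lemma Cij_self n (i j : 'I_n.+1) : 0 < i -> (i, j) \in Cij i j.
Proof.
move=> i0; rewrite inCij /= mulnC eqxx /=.
by apply: iZ_of_dvd => //; rewrite dvdn_gcdl.
Qed.

Arguments Cij_self {n i} j.

Lemma Cij_max n (i j : 'I_n.+1) p : 0 < i ->
  (forall q, q \in Cij i j -> commb p q) -> p \in Cij i j.
Proof.
move=> i0 H; set g := gcdn i n.+1; set d' := n.+1 %/ g.
have g0 : 0 < g by rewrite gcdn_gt0 i0.
have Hd : d' * g = n.+1 := divnK (dvdn_gcdr _ _).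
have d'0 : 0 < d' by move: Hd; case: (d') => //.
pose q1 : pt n.+1 := (inord 0, inord (d' %% n.+1)).
have q1C : q1 \in Cij i j.
  rewrite inCij /= inord_mod (inordK (ltn0Sn n)); apply/andP; split.
    rewrite muln0 mod0n modnMmr -[i : nat](divnK (dvdn_gcdl i n.+1)) -/g.
    by rewrite -mulnA [g * d']mulnC Hd modnMl.
  by apply/existsP; exists ord0; rewrite muln0 mod0n.
have := H q1 q1C; rewrite /commb /= inord_mod (inordK (ltn0Sn n)) muln0 mod0n modnMmr.
rewrite -[X in _ %% X]Hd -/(dvdn _ _) [d' * g]mulnC dvdn_pmul2r // => Hg.
have := H _ (@Cij_self n i j i0); rewrite /commb /= => /eqP Hc.
rewrite inCij; apply/andP; split.
  by apply/eqP; rewrite [j * _]mulnC Hc mulnC.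
by apply: iZ_of_dvd.
Qed.

Lemma Cij_MCS n (i j : 'I_n.+1) : 0 < i -> is_MCS (Cij i j).
Proof.
move=> i0; apply: is_MCS_intro; first by move=> p q; exact: Cij_comm.
by move=> p; apply: Cij_max.
Qed.

Arguments Cij_MCS {n i} j.

Lemma C00_MCS n : 0 < n -> is_MCS (C00 n.+1).
Proof.
move=> n0; apply: is_MCS_intro.
  by move=> p q; rewrite !inE /commb => /eqP -> /eqP ->; rewrite mul0n muln0.
move=> p H; pose q : pt n.+1 := (ord0, inord 1).
have : commb p q by apply: H; rewrite inE.
rewrite /commb /= (@inordK n 1) // muln1 muln0 mod0n modn_small //.
by rewrite inE.
Qed.

Lemma classify n (C : {set pt n.+1}) : is_MCS C ->
  C = C00 n.+1 \/ exists ij, ij \in MCS_index n.+1 /\ C = Cij ij.1 ij.2.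
Proof.
move=> HC.
case: (boolP [exists p in C, p.1 != 0 :> nat]) =>
   [/exists_inP [p0' Hp0' Hnz] | /exists_inPn Hall]; last first.
  left; apply/setP => p; rewrite inE; apply/idP/idP.
    by move=> Hp; move: (Hall p Hp); rewrite negbK.
  move=> /eqP Hp; apply: mem_MCS => // q Hq; move: (Hall q Hq); rewrite negbK => /eqP Hq0.
  by rewrite /commb Hp Hq0 mul0n muln0.
right.
pose P := fun x => [exists p in C, (p.1 == x :> nat) && (0 < x)].
have exP : exists x, P x.
  by exists p0'.1; apply/exists_inP; exists p0' => //; rewrite eqxx lt0n.
case: (ex_minnP exP) => g /exists_inP [p0 Hp0 /andP [/eqP Hg g0]] Hmin.
have Hmin' : forall q, q \in C -> 0 < q.1 -> g <= q.1.
  by move=> q Hq q0; apply: Hmin; apply/exists_inP; exists q => //; rewrite eqxx q0.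
have gd : g < n.+1 by rewrite -Hg ltn_ord.
have HA : forall p, p \in C -> g %| p.1.
  move=> p Hp; set x := (p.1 : nat); set qq := x %/ g; set r := x %% g.
  have := MCS_lin 1 p (qq * n) p0 HC Hp Hp0.
  set z := lin _ _ _ _ => Hz.
  have Hz1 : (z.1 : nat) = r.
    rewrite /z /lin /= inord_mod Hg -/x.
    have -> : 1 * x + qq * n * g = qq * g * n.+1 + r.
      by rewrite {1}(divn_eq x g) -/qq -/r; ring.
    by rewrite modnMDl modn_small // (ltn_trans _ gd) // ltn_pmod.
  rewrite /dvdn -/r; apply/eqP; case: (posnP r) => // r0.
  have := Hmin' z Hz; rewrite Hz1 r0 => /(_ isT); by rewrite leqNgt ltn_pmod.
have gdiv : g %| n.+1.
  set qq := n.+1 %/ g; set r := n.+1 %% g.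
  have := MCS_lin (qq * n) p0 0 p0 HC Hp0 Hp0; set z := lin _ _ _ _ => Hz.
  case: (posnP r) => [r0|r0]; first by rewrite /dvdn -/r r0.
  have Hz1 : (z.1:nat) = r.
    rewrite /z /lin /= inord_mod Hg mul0n addn0.
    have E := divn_eq n.+1 g; rewrite -/qq -/r in E.
    have rg : r < g by rewrite ltn_pmod.
    rewrite mulnAC; move: E rg; set m := qq * g => E rg.
    have m0 : 0 < m by case: (posnP m) => // m0'; lia.
    have -> : m * n = m.-1 * n.+1 + r by nia.
    by rewrite modnMDl modn_small // (ltn_trans rg gd).
  have := Hmin' z Hz; rewrite Hz1 r0 => /(_ isT); by rewrite leqNgt ltn_pmod.
set d' := n.+1 %/ g.
have Hd : d' * g = n.+1 := divnK gdiv.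
have d'0 : 0 < d' by move: Hd; case: (d') => //.
set y0 := (p0.2 : nat); set j0 := y0 %% d'.
have j0d' : j0 < d' by rewrite ltn_pmod.
have j0d : j0 < n.+1 by apply: (leq_trans j0d'); rewrite leq_div.
have HCsub : forall p, p \in C -> p \in Cij p0.1 (inord j0).
  move=> p Hp; rewrite inCij; apply/andP; split; last first.
    apply: iZ_of_dvd; [by rewrite Hg | exact: ltn_ord | by rewrite Hg (gcdn_idPl gdiv) HA].
  have Hc := MCS_comm HC Hp Hp0; move: Hc; rewrite /commb Hg => /eqP Hc.
  rewrite inordK //; set t := (p.1 : nat) %/ g.
  have Ex : (p.1 : nat) = t * g by rewrite divnK // HA.
  have E : j0 * (t * g) = t * ((y0 * g) %% n.+1) by rewrite -Hd -muln_modl /j0; ring.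
  apply/eqP; rewrite -Ex -/y0 in E; rewrite E modnMmr mulnC -Hc Ex; congr (_ %% _); ring.
exists (p0.1, inord j0); split.
  by rewrite inE /= inordK // Hg g0 gdiv.
apply/setP => q; apply/idP/idP; first exact: HCsub.
move=> Hq; apply: mem_MCS => // r Hr; exact: Cij_comm Hq (HCsub r Hr).
Qed.

Arguments classify {n C}.

Lemma card_norm n (i j : 'I_n.+1) : 0 < i -> i %| n.+1 -> #|Cij i j| = n.+1.
Proof.
move=> i0 idv; set d' := n.+1 %/ i.
have Hd : d' * i = n.+1 := divnK idv.
have d'0 : 0 < d' by move: Hd; case: (d') => //.
pose h := fun ts : 'I_d' * 'I_i =>
  ((inord (i * ts.1), inord ((j * ts.1) %% d' + d' * ts.2)) : pt n.+1).
have b1 : forall t : 'I_d', i * t < n.+1.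
  by move=> t; rewrite -[X in _ < X]Hd mulnC ltn_pmul2r.
have b2 : forall (t : 'I_d') (s : 'I_i), (j * t) %% d' + d' * s < n.+1.
  move=> t s; have h1 := ltn_pmod (j * t) d'0; have h2 := ltn_ord s; rewrite -[X in _ < X]Hd; nia.
have hinj : injective h.
  move=> [t s] [t' s'] [E1 E2].
  move/(congr1 val): E1; rewrite /= !inordK // => /eqP; rewrite eqn_pmul2l // => /eqP tt.
  have tt' : t = t' := val_inj tt; subst t'.
  move/(congr1 val): E2; rewrite /= !inordK // => /eqP.
  by rewrite eqn_add2l eqn_pmul2l // => /eqP ss; rewrite (val_inj ss).
have -> : Cij i j = h @: setT.
  apply/setP => p; apply/idP/imsetP.
    rewrite inCij => /andP [/eqP Hm HZ].
    have ix : i %| p.1 by have := @iZ_dvd _ _ _ HZ; rewrite (gcdn_idPl idv).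
    have t_lt : p.1 %/ i < d' by rewrite ltn_divLR // Hd.
    have s_lt : p.2 %/ d' < i by rewrite ltn_divLR // mulnC Hd.
    exists (Ordinal t_lt, Ordinal s_lt); first by rewrite inE.
    move: Hm ix t_lt s_lt; clear HZ; case: p => x y /= Hm ix t_lt s_lt.
    rewrite /h /=; congr pair; apply: val_inj; rewrite /= inordK.
    - by rewrite mulnC divnK.
    - exact: (b1 (Ordinal t_lt)).
    2: exact: (b2 (Ordinal t_lt) (Ordinal s_lt)).
    rewrite {1}(divn_eq y d') addnC mulnC; congr (_ + _).
    apply/eqP; rewrite -(eqn_pmul2l i0) !muln_modr [i * d']mulnC Hd Hm.
    by rewrite mulnCA [i * (x %/ i)]mulnC divnK.
  move=> [[t s] _ ->]; rewrite inCij /= !inordK //; apply/andP; split.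
    rewrite mulnDr muln_modr (mulnC i d') Hd; apply/eqP.
    rewrite modnDml [i * (d' * s)]mulnA (mulnC i d') Hd addnC mulnC modnMDl; congr (_ %% _); ring.
  by apply: iZ_of_dvd => //; rewrite (gcdn_idPl idv) dvdn_mulr.
by rewrite card_imset // cardsT card_prod !card_ord.
Qed.

Lemma card_Cij n (i j : 'I_n.+1) : 0 < i -> #|Cij i j| = n.+1.
Proof.
move=> i0; case: (classify (Cij_MCS j i0)) => [E | [[g j0] [Hin E]]].
  by have := Cij_self j i0; rewrite E inE /= eqn0Ngt i0.
by rewrite E; move: Hin; rewrite inE => /and3P [g0 gd _]; exact: card_norm.
Qed.

Lemma Cij_inj n :
  {in MCS_index n.+1 &, injective (fun ij : 'I_n.+1 * 'I_n.+1 => Cij ij.1 ij.2)}.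
Proof.
move=> [i j] [i' j']; rewrite !inE /= => /and3P [i0 id jd] /and3P [i0' id' jd'] E.
have H1 : (i, j) \in Cij i' j' by rewrite -E Cij_self.
have H2 : (i', j') \in Cij i j by rewrite E Cij_self.
have ii : i = i'.
  apply: val_inj; apply/eqP; rewrite eqn_dvd.
  move: H1 H2; rewrite !inCij /= => /andP [_ Z1] /andP [_ Z2].
  have := @iZ_dvd _ _ _ Z1; have := @iZ_dvd _ _ _ Z2.
  by rewrite (gcdn_idPl id) (gcdn_idPl id') => -> ->.
subst i'; congr pair; apply: val_inj.
move: H1; rewrite inCij /= => /andP [/eqP H _].
have Hd : i * (n.+1 %/ i) = n.+1 by rewrite mulnC divnK.
have : i * (j %% (n.+1 %/ i)) = i * (j' %% (n.+1 %/ i)).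
  by rewrite !muln_modr Hd H mulnC.
by rewrite !modn_small // => /eqP; rewrite eqn_pmul2l // => /eqP.
Qed.

Lemma Cij_neq_C00 n ij : ij \in MCS_index n.+1 -> Cij ij.1 ij.2 != C00 n.+1.
Proof.
case: ij => i j; rewrite inE /= => /and3P [i0 _ _]; apply/eqP => E.
by have := Cij_self j i0; rewrite E inE /= eqn0Ngt i0.
Qed.

Lemma MCS_iff n (C : {set pt n.+1}) : 0 < n -> is_MCS C <-> C \in MCS_d n.+1.
Proof.
move=> n0; split.
  move/classify => [-> | [ij [Hin ->]]]; rewrite /MCS_d inE.
    by rewrite in_set1 eqxx orbT.
  by apply/orP; left; apply/imsetP; exists ij.
rewrite /MCS_d inE => /orP [/imsetP [[i j] Hin ->] | ].
  by move: Hin; rewrite inE /= => /and3P [i0 _ _]; exact: Cij_MCS.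
by rewrite inE => /eqP ->; exact: C00_MCS.
Qed.

Lemma count_lt d m : m <= d -> \sum_(j < d | j < m) 1 = m.
Proof.
move=> md; rewrite -(big_mkord (fun j => j < m) (fun _ => 1)).
rewrite (eq_bigl (fun j => true && (j < m))) // -big_nat_widen //.
by rewrite sum_nat_const_nat subn0 muln1.
Qed.

Lemma card_index n :
  #|MCS_index n.+1| = \sum_(i < n.+1 | (0 < i) && (i %| n.+1)) (n.+1 %/ i).
Proof.
rewrite -sum1_card.
rewrite (eq_bigl (fun ij : 'I_n.+1 * 'I_n.+1 => true && [&& 0 < ij.1, ij.1 %| n.+1 & ij.2 < n.+1 %/ ij.1])); last by move=> ij; rewrite inE.
rewrite -(pair_big_dep xpredT (fun (i : 'I_n.+1) (j : 'I_n.+1) => [&& 0 < i, i %| n.+1 & j < n.+1 %/ i]) (fun _ _ => 1)) /=.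
rewrite [RHS]big_mkcond /=; apply: eq_bigr => i _.
case: ((0 < i) && (i %| n.+1)) / andP => [[i0 id] | H].
  rewrite (eq_bigl (fun j : 'I_n.+1 => j < n.+1 %/ i)); last by move=> j; rewrite i0 id.
  by rewrite count_lt // leq_div.
by rewrite big1 // => j /and3P [a b _]; case: H.
Qed.

Lemma sigma_eq n : sigma n.+1 = 1 + \sum_(i < n.+1 | (0 < i) && (i %| n.+1)) (n.+1 %/ i).
Proof.
set d := n.+1.
have Pm : perm_eq (divisors d) [seq d %/ k | k <- divisors d].
  apply: uniq_perm; first exact: divisors_uniq.
    rewrite map_inj_in_uniq ?divisors_uniq // => k k'.
    rewrite -!dvdn_divisors // => kd k'd E.
    have e1 : (d %/ k') * k = (d %/ k') * k' by rewrite -{1}E !divnK.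
    have pos : 0 < d %/ k' by rewrite divn_gt0 ?(dvdn_gt0 _ k'd) // dvdn_leq.
    by apply/eqP; rewrite -(eqn_pmul2l pos) e1.
  move=> x; apply/idP/mapP.
    rewrite -dvdn_divisors // => xd; exists (d %/ x).
      by rewrite -dvdn_divisors // dvdn_div.
    by rewrite divnA // mulKn.
  by move=> [k]; rewrite -!dvdn_divisors // => kd ->; rewrite dvdn_div.
have Pi : perm_eq (divisors d) [seq k <- iota 0 d.+1 | k %| d].
  apply: uniq_perm; [exact: divisors_uniq | by rewrite filter_uniq // iota_uniq |].
  move=> x; rewrite mem_filter mem_iota add0n ltnS -dvdn_divisors //.
  by case xd: (x %| d); rewrite //= dvdn_leq.
rewrite /sigma (perm_big _ Pm) big_map (perm_big _ Pi) big_filter.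
have -> : iota 0 d.+1 = index_iota 0 d.+1 by rewrite /index_iota subn0.
rewrite big_mkord.
rewrite big_mkcond big_ord_recr /= dvdnn divnn /= addnC; congr (_ + _).
rewrite [RHS]big_mkcond; apply: eq_bigr => i _ /=.
by case: (nat_of_ord i) => //=; rewrite dvd0n.
Qed.

Theorem theorem3 (d : nat) (hd : 3 <= d) :
  (* (1) *)
  (forall i j : 'I_d, i != 0 :> nat ->
     is_MCS (Cij i j) /\ #|Cij i j| = d) /\
  (* (2) *)
  (forall C : {set pt d}, is_MCS C ->
     C = C00 d \/ exists i j : 'I_d, i != 0 :> nat /\ C = Cij i j) /\
  (* (3) pairwise distinct, exactly the MCS, and counted by sigma d *)
  ({in MCS_index d &, injective (fun ij : 'I_d * 'I_d => Cij ij.1 ij.2)} /\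
   (forall ij, ij \in MCS_index d -> Cij ij.1 ij.2 != C00 d) /\
   (forall C : {set pt d}, is_MCS C <-> C \in MCS_d d) /\
   #|[set C : {set pt d} | is_MCS C]| = sigma d).
Proof.
case: d hd => [//|n] hd; have n0 : 0 < n by case: n hd.
split.
  move=> i j; rewrite -lt0n => i0; split; [exact: Cij_MCS | exact: card_Cij].
split.
  move=> C /classify [-> | [[i j] [Hin ->]]]; first by left.
  right; exists i, j; move: Hin; rewrite inE /= => /and3P [i0 _ _].
  by rewrite -lt0n i0.
split; first exact: Cij_inj.
split; first by move=> ij; exact: Cij_neq_C00.
split; first by move=> C; exact: MCS_iff.
have -> : [set C : {set pt n.+1} | is_MCS C] = MCS_d n.+1.
  by apply/setP => C; rewrite inE; apply/idP/idP => /(@MCS_iff n C n0).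
rewrite /MCS_d setUC cardsU1 card_in_imset; last exact: Cij_inj.
have -> : C00 n.+1 \notin [set Cij ij.1 ij.2 | ij in MCS_index n.+1].
  apply/imsetP => [[ij Hin E]].
  by have := @Cij_neq_C00 n ij Hin; rewrite E eqxx.
by rewrite card_index sigma_eq.
Qed.
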